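(* Let $d\ge1$ and $a_1,\dots,a_d>0$, and define $G:(0,\infty)\to\mathbb{R}$ by $$G(k)=2k\sum_{j=1}^d\tan\left(\frac{\pi}{2}\left(\left\lceil\frac{ka_j}{\pi}\right\rceil-\frac{ka_j}{\pi}\right)\right).$$ Then: (i) a point $k>0$ is a discontinuity of $G$ if and only if $k=m\pi/a_j$ for some $j\in\{1,\dots,d\}$ and some $m\in\mathbb{N}$; (ii) $G$ is strictly decreasing on each interval of continuity; (iii) for every $m\in\mathbb{N}$ and $j\in\{1,\dots,d\}$, $\lim_{k\searrow m\pi/a_j}G(k)=+\infty$.
   Context: $\lceil\cdot\rceil$ denotes the ceiling function and $\mathbb{N}=\{1,2,3,\dots\}$. *)

(* Defs.v *)
From HB Require Import structures.
From mathcomp Require Import all_boot all_order all_algebra.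
From mathcomp Require Import all_classical all_reals all_analysis.
Set Implicit Arguments. Unset Strict Implicit. Unset Printing Implicit Defensive.
Import Order.TTheory GRing.Theory Num.Theory.
Import numFieldNormedType.Exports.
Local Open Scope ring_scope.

Definition Gfun (R : realType) (d : nat) (a : 'I_d -> R) (k : R) : R :=
  2 * k * \sum_(j < d)
     tan (pi / 2 * ((Num.ceil (k * a j / pi))%:~R - k * a j / pi)).

(* Main.v *)
Require Import Defs.
From HB Require Import structures.
From mathcomp Require Import all_boot all_order all_algebra.
From mathcomp Require Import all_classical all_reals all_analysis.
From mathcomp Require Import ring lra.
Set Implicit Arguments. Unset Strict Implicit. Unset Printing Implicit Defensive.
Import Order.TTheory GRing.Theory Num.Theory.
Import numFieldNormedType.Exports.
Local Open Scope classical_set_scope.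
Local Open Scope ring_scope.
Section S.
Variable R : realType.

Lemma tan_ge0 (t : R) : 0 <= t -> t < pi / 2 -> 0 <= tan t.
Proof.
move=> t0 t1; rewrite /tan divr_ge0 //.
  apply: sin_ge0_pi; rewrite t0 /= (le_trans (ltW t1)) //.
  by rewrite ler_pdivrMr // ler_peMr ?pi_ge0 ?ler1n.
by apply: cos_ge0_pihalf; rewrite (ltW t1) andbT (le_trans _ t0) // oppr_le0 divr_ge0 ?pi_ge0.
Qed.

Lemma sin_lt_id (y : R) : 0 < y -> y < pi -> sin y < y.
Proof.
move=> y0 ypi.
have [c /itvP cI E] := @MVT R sin cos 0 y y0 (fun x _ => is_derive_sin x)
   (continuous_subspaceT (@continuous_sin R)).
move: E; rewrite sin0 subr0 subr0 => ->.
rewrite gtr_pMl // lt_neqAle cos_le1 andbT.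
have : 0 < sin c by apply: sin_gt0_pi; rewrite cI /= (lt_trans _ ypi) ?cI.
apply: contraTneq => c1.
have := cos2Dsin2 c; rewrite c1 expr1n => /eqP; rewrite -subr_eq0 addrC addKr sqrf_eq0 => /eqP ->.
by rewrite ltxx.
Qed.

Lemma hder (C x : R) : cos x != 0 ->
  is_derive x 1 (fun t : R => (C - 2 * t) * tan t)
     ((C - 2 * x) * (cos x)^-2 - 2 * tan x).
Proof.
move=> cx; have h1 := is_derive_tan cx.
apply: trigger_derive; rewrite add0r mul1r /GRing.scale /= mulr1 mulrN [tan x * _]mulrC; reflexivity.
Qed.

Lemma cos_ne0 (t : R) : 0 <= t -> t < pi / 2 -> cos t != 0.
Proof.
move=> t0 t1; rewrite gt_eqF // cos_gt0_pihalf // t1 andbT.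
by rewrite (lt_le_trans _ t0) // oppr_lt0 divr_gt0 ?pi_gt0.
Qed.

Lemma h_incr (C t1 t2 : R) : pi <= C -> 0 <= t1 -> t1 < t2 -> t2 < pi / 2 ->
  (C - 2 * t1) * tan t1 < (C - 2 * t2) * tan t2.
Proof.
move=> Cpi t10 t12 t2p.
have hc : {within `[t1, t2], continuous (fun t : R => (C - 2 * t) * tan t)}.
  apply: derivable_within_continuous => x; rewrite in_itv /= => /andP[xa xb].
  apply: ex_derive; apply: (hder C (cos_ne0 _ _)).
    by rewrite (le_trans t10).
  by rewrite (le_lt_trans _ t2p).
have [c cI E] := @MVT R (fun t : R => (C - 2 * t) * tan t)
   (fun x => (C - 2 * x) * (cos x)^-2 - 2 * tan x) t1 t2 t12
   (fun x xI => hder C (cos_ne0 (le_trans t10 (ltW (andP xI).1)) (lt_trans (andP xI).2 t2p))) hc.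
move: cI; rewrite in_itv /= => /andP[c1 c2].
rewrite -subr_gt0 E mulr_gt0 ?subr_gt0 //.
have c0 : 0 < c by rewrite (le_lt_trans t10).
have cp : c < pi / 2 by rewrite (lt_trans _ t2p).
have cc : 0 < cos c by rewrite cos_gt0_pihalf // cp andbT (lt_trans _ c0) // oppr_lt0 divr_gt0 ?pi_gt0.
rewrite /tan.
have -> : 2 * (sin c / cos c) = (sin (c *+ 2)) * (cos c)^-2.
  rewrite sin_mulr2n; field; exact: lt0r_neq0.
rewrite ltr_pM2r ?invr_gt0 ?exprn_gt0 //.
have -> : sin (c *+ 2) = sin (pi - c *+ 2).
  by rewrite sinB sinpi cospi mul0r mulN1r sub0r opprK.
apply: (lt_le_trans (sin_lt_id _ _)).
- rewrite mulr2n; lra.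
- rewrite mulr2n; lra.
- rewrite mulr2n; lra.
Qed.

Definition T (a k : R) := tan (pi / 2 * ((Num.ceil (k * a / pi))%:~R - k * a / pi)).

Lemma ceil_frac (x : R) : 0 <= (Num.ceil x)%:~R - x < 1.
Proof.
have /andP[h1 h2] := ceil_itv x.
rewrite subr_ge0 h2 /= ltrBlDr addrC -ltrBlDr.
by move: h1; rewrite intrD.
Qed.

Lemma pi2_gt0 : 0 < pi / 2 :> R.
Proof. by rewrite divr_gt0 ?pi_gt0. Qed.

Lemma theta_lt (u : R) : u < 1 -> pi / 2 * u < pi / 2.
Proof. by move=> u1; rewrite -{2}(mulr1 (pi / 2)) ltr_pM2l ?pi2_gt0. Qed.

Lemma theta_ge0 (u : R) : 0 <= u -> 0 <= pi / 2 * u.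
Proof. by move=> u0; rewrite mulr_ge0 // ltW ?pi2_gt0. Qed.

Lemma T_ge0 a k : 0 <= T a k.
Proof.
have /andP[h1 h2] := ceil_frac (k * a / pi).
by apply: tan_ge0; [apply: theta_ge0|apply: theta_lt].
Qed.

Lemma ceil_ge1 (x : R) : 0 < x -> 1 <= (Num.ceil x)%:~R :> R.
Proof.
move=> x0; rewrite ler1z -gtz0_ge1 -(@ltr0z R).
exact: lt_le_trans x0 (ceil_ge x).
Qed.

Lemma kE_gen (p a c k : R) : p != 0 -> a != 0 ->
  k = (c * p - 2 * (p / 2 * (c - k * a / p))) / a.
Proof. by move=> p0 a0; field; rewrite p0 a0. Qed.

Lemma T_decr a s t : 0 < a -> 0 < s -> s < t ->
  Num.ceil (s * a / pi) = Num.ceil (t * a / pi) -> t * T a t < s * T a s.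
Proof.
move=> a0 s0 st E; rewrite /T -E.
set c := (Num.ceil (s * a / pi))%:~R.
have pi0 : pi != 0 :> R by rewrite gt_eqF ?pi_gt0.
have a0' : a != 0 by rewrite gt_eqF.
have kE k : k = (c * pi - 2 * (pi / 2 * (c - k * a / pi))) / a.
  exact: kE_gen.
rewrite {1}(kE t) {1}(kE s) [_ / a * _]mulrAC [_ / a * _]mulrAC ltr_pM2r ?invr_gt0 //.
have xst : s * a / pi < t * a / pi by rewrite ltr_pM2r ?invr_gt0 ?pi_gt0 // ltr_pM2r.
have c1 : 1 <= c by apply: ceil_ge1; rewrite !mulr_gt0 ?invr_gt0 ?pi_gt0.
have /andP[hs1 hs2] := ceil_frac (s * a / pi).
have /andP[ht1 ht2] := ceil_frac (t * a / pi).
rewrite -E -/c in ht1 ht2.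
apply: h_incr.
- by rewrite -{1}(mul1r pi) ler_pM2r ?pi_gt0.
- exact: theta_ge0.
- by rewrite ltr_pM2l ?pi2_gt0 // ltrD2l ltrN2.
- exact: theta_lt.
Qed.

Lemma is_derive_cont (f : R -> R) (x df : R) : is_derive x (1:R) f df -> {for x, continuous f}.
Proof.
move=> h; apply: differentiable_continuous; apply/derivable1_diffP.
by case: h.
Qed.

Lemma lin_cont1 (a k : R) : {for k, continuous (fun k' : R => k' * a / pi)}.
Proof.
apply: (@is_derive_cont _ _ (a / pi)).
apply: trigger_derive; rewrite !scaler0 !add0r /GRing.scale /= mulr1 mulrC; reflexivity.
Qed.

Lemma lin_cont2 (c a k : R) : {for k, continuous (fun k' : R => pi / 2 * (c - k' * a / pi))}.
Proof.
apply: (@is_derive_cont _ _ (- (pi / 2 * (a / pi)))).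
apply: trigger_derive; rewrite !scaler0 !add0r mul1r /GRing.scale /= mulr1 [pi^-1 * a]mulrC mulrN; reflexivity.
Qed.
Lemma ceil_near (a k : R) : k * a / pi < (Num.ceil (k * a / pi))%:~R ->
  \forall k' \near k, Num.ceil (k' * a / pi) = Num.ceil (k * a / pi).
Proof.
move=> hlt.
have hc := @lin_cont1 a k.
have /andP[h1 _] := ceil_itv (k * a / pi).
near=> k'; apply: ceil_def; apply/andP; split.
  by near: k'; apply: cvgr_gt hc _ h1.
by apply: ltW; near: k'; apply: cvgr_lt hc _ hlt.
Unshelve. all: by end_near.
Qed.

Lemma term_cont (c a k : R) : cos (pi / 2 * (c - k * a / pi)) != 0 ->
  {for k, continuous (fun k' : R => k' * tan (pi / 2 * (c - k' * a / pi)))}.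
Proof.
move=> hcos.
have h2 := continuous_comp (@lin_cont2 c a k) (continuous_tan hcos).
exact: (continuousM (@cvg_id _ (nbhs k)) h2).
Qed.
Variables (d : nat) (a : 'I_d -> R).

Lemma GE k : Gfun a k = 2 * \sum_(j < d) k * T (a j) k.
Proof. by rewrite /Gfun -mulrA mulr_sumr. Qed.

Lemma cont_G k : (forall j, k * a j / pi < (Num.ceil (k * a j / pi))%:~R) ->
  {for k, continuous (Gfun a)}.
Proof.
move=> hlt.
pose c j := (Num.ceil (k * a j / pi))%:~R : R.
pose H k' := 2 * \sum_(j < d) k' * tan (pi / 2 * (c j - k' * a j / pi)).
have hn : \forall k' \near k, H k' = Gfun a k'.
  have : \forall k' \near k, forall j, Num.ceil (k' * a j / pi) = Num.ceil (k * a j / pi).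
    exact: (@filter_forall R 'I_d (fun j k' => Num.ceil (k' * a j / pi) = Num.ceil (k * a j / pi)) (nbhs k) _ (fun j => ceil_near (hlt j))).
  apply: filterS => k' hk'; rewrite GE /H; congr (2 * _).
  by apply: eq_bigr => j _; rewrite /T hk'.
have HH : H @ k --> H k.
  apply: cvgM; first exact: cvg_cst.
  apply: (cvg_big (op := +%R) (x0 := 0) (P := xpredT) add_continuous) => j _.
  apply: term_cont; apply: cos_ne0.
    by apply: theta_ge0; have /andP[] := ceil_frac (k * a j / pi).
  by apply: theta_lt; have /andP[] := ceil_frac (k * a j / pi).
rewrite /prop_for /continuous_at -(nbhs_singleton hn).
exact: cvg_trans (near_eq_cvg hn) HH.
Qed.

Lemma theta_bound (w L y : R) : 0 < w -> L < w ->
  1 - (w - L) / (2 * w) < y -> y < 1 -> L < w * y /\ w * y < w.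
Proof.
move=> w0 Lw h1 h2.
have E : w * (1 - (w - L) / (2 * w)) = (w + L) / 2.
  by field; rewrite gt_eqF.
split.
  apply: (lt_trans _ (_ : w * (1 - (w - L) / (2 * w)) < w * y)).
    by rewrite E; lra.
  by rewrite ltr_pM2l.
by rewrite -{2}(mulr1 w) ltr_pM2l.
Qed.

Lemma e_bound (w L : R) : 0 < w -> - w < L -> L < w ->
  0 < (w - L) / (2 * w) < 1.
Proof.
move=> w0 h1 h2; apply/andP; split.
  by rewrite divr_gt0 ?mulr_gt0 // subr_gt0.
by rewrite ltr_pdivrMr ?mulr_gt0 // mul1r; lra.
Qed.

Lemma lin_eq (p b k0 e : R) : p != 0 -> b != 0 ->
  (k0 + e * p / b) * b / p = k0 * b / p + e.
Proof. by move=> p0 b0; field; rewrite p0 b0. Qed.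

Lemma lin_eq0 (p b m : R) : p != 0 -> b != 0 -> m * p / b * b / p = m.
Proof. by move=> p0 b0; field; rewrite p0 b0. Qed.

Lemma mono_x (b u v : R) : 0 < b -> u < v -> u * b / pi < v * b / pi.
Proof. by move=> b0 uv; rewrite ltr_pM2r ?invr_gt0 ?pi_gt0 // ltr_pM2r. Qed.

Lemma G_inf (ha : forall j, 0 < a j) (j : 'I_d) (m : nat) : (1 <= m)%N ->
  Gfun a k @[k --> (m%:R * pi / a j)^'+] --> +oo.
Proof.
move=> m1.
set k0 := m%:R * pi / a j.
have pi0 : pi != 0 :> R by rewrite gt_eqF ?pi_gt0.
have aj0 : a j != 0 by rewrite gt_eqF.
have k0pos : 0 < k0 by rewrite divr_gt0 ?mulr_gt0 ?pi_gt0 ?ltr0n.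
have k0E : k0 * a j / pi = m%:R by apply: lin_eq0.
apply/cvgryPge => M.
set N := M / (2 * k0).
set L := atan N.
have [/andP[hL1 hL2] tL] := atan_def N.
rewrite -/L in hL1 hL2 tL.
set e := (pi / 2 - L) / (2 * (pi / 2)).
have /andP[e0 e1] : 0 < e < 1 by apply: e_bound; rewrite ?pi2_gt0.
have hlt : k0 < k0 + e * pi / a j.
  by rewrite ltrDl; apply: divr_gt0; [apply: mulr_gt0 e0 (pi_gt0 _)|exact: ha].
near=> k.
have hk1 : k0 < k by near: k; exact: nbhs_right_gt.
have hk2 : k < k0 + e * pi / a j by near: k; exact: nbhs_right_lt.
have hx1 : m%:R < k * a j / pi by rewrite -k0E mono_x.
have hx2 : k * a j / pi < m%:R + e.
  by rewrite -k0E -lin_eq // mono_x.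
have hc : Num.ceil (k * a j / pi) = (m.+1)%:Z.
  apply: ceil_def; rewrite intrB -!pmulrn mulrSr addrK (ltW (lt_trans hx2 _)) ?hx1 //.
  by rewrite ltrD2l.
have [th1 th2] : L < pi / 2 * ((Num.ceil (k * a j / pi))%:~R - k * a j / pi) /\
     pi / 2 * ((Num.ceil (k * a j / pi))%:~R - k * a j / pi) < pi / 2.
  have hm : ((m.+1)%:Z)%:~R = m%:R + 1 :> R by rewrite -pmulrn mulrSr.
  apply: theta_bound; rewrite ?pi2_gt0 // hc hm -/e; lra.
have hT : N < T (a j) k.
  rewrite /T -tL ltr_tan // in_itv /=; apply/andP; split => //.
  by rewrite (lt_trans hL1).
rewrite GE (bigD1 j) //=.
have hs : 0 <= \sum_(i < d | i != j) k * T (a i) k.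
  by apply: sumr_ge0 => i _; rewrite mulr_ge0 ?T_ge0 // ltW // (lt_trans k0pos).
apply: (le_trans _ (_ : 2 * (k * T (a j) k) <= _)); last first.
  by rewrite ler_pM2l // lerDl.
have -> : M = 2 * (k0 * N) by rewrite /N mulrA mulrC divfK // mulf_neq0 // gt_eqF.
rewrite ler_pM2l //.
apply: (le_trans (_ : k0 * N <= k0 * T (a j) k)).
  by rewrite ler_pM2l // ltW.
by rewrite ler_wpM2r ?T_ge0 // ltW.
Unshelve. all: by end_near.
Qed.

Lemma not_cont (ha : forall j, 0 < a j) (j : 'I_d) (m : nat) : (1 <= m)%N ->
  ~ {for (m%:R * pi / a j), continuous (Gfun a)}.
Proof.
move=> m1; set k0 := m%:R * pi / a j => hc.
have h1 : Gfun a k @[k --> k0^'+] --> Gfun a k0 by exact: cvg_within_filter hc.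
have h2 : \forall k \near k0^'+, Gfun a k < Gfun a k0 + 1.
  by apply: (cvgr_lt _ h1); rewrite ltrDl ltr01.
have h3 := (cvgryPge _).1 (@G_inf ha j m m1) (Gfun a k0 + 1).
have : \forall k \near k0^'+, False.
  near=> k.
  have A : Gfun a k < Gfun a k0 + 1 by near: k; exact: h2.
  have B : Gfun a k0 + 1 <= Gfun a k by near: k; exact: h3.
  by move: (lt_le_trans A B); rewrite ltxx.
by case/filter_ex.
Unshelve. all: by end_near.
Qed.

Lemma kx_le (b u v : R) : 0 < b -> (u <= v * pi / b) = (u * b / pi <= v).
Proof. by move=> b0; rewrite ler_pdivlMr // ler_pdivrMr ?pi_gt0. Qed.

Lemma kx_lt (b u v : R) : 0 < b -> (u < v * pi / b) = (u * b / pi < v).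
Proof. by move=> b0; rewrite ltr_pdivlMr // ltr_pdivrMr ?pi_gt0. Qed.

Lemma kx_gt (b u v : R) : 0 < b -> (v * pi / b < u) = (v < u * b / pi).
Proof. by move=> b0; rewrite ltr_pdivrMr // ltr_pdivlMr ?pi_gt0. Qed.

Lemma kxk (p b k : R) : p != 0 -> b != 0 -> k = k * b / p * p / b.
Proof. by move=> p0 b0; field; rewrite p0 b0. Qed.

Lemma int_nat (c : int) : 1 <= c%:~R :> R ->
  (1 <= `|c|)%N /\ (`|c|%N)%:R = c%:~R :> R.
Proof.
move=> c1.
have c0 : 0 <= c by rewrite -(@ler0z R) (le_trans ler01 c1).
have [n cE] : exists n : nat, c = n%:Z by exists `|c|%N; rewrite gez0_abs.
move: c1; rewrite cE absz_nat -!pmulrn ler1n => c1; split => //.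
Qed.
End S.

Unset Implicit Arguments.
Set Strict Implicit.

Theorem lemma3p2 (R : realType) (d : nat) (a : 'I_d -> R)
  (hd : (1 <= d)%N) (ha : forall j, 0 < a j) :
  (* (i) discontinuities *)
  (forall k : R, 0 < k ->
     (~ {for k, continuous (Gfun a)} <->
      exists (j : 'I_d) (m : nat), (1 <= m)%N /\ k = m%:R * pi / a j))
  /\
  (* (ii) strictly decreasing on every open interval of continuity *)
  (forall x y : R, 0 < x -> x < y ->
     (forall z, x < z < y -> {for z, continuous (Gfun a)}) ->
     forall s t, x < s -> s < t -> t < y -> Gfun a t < Gfun a s)
  /\
  (* (iii) right limit +oo at each m pi / a_j *)
  (forall (j : 'I_d) (m : nat), (1 <= m)%N ->
     Gfun a k @[k --> (m%:R * pi / a j)^'+] --> +oo).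
Proof.
have pi0 : pi != 0 :> R by rewrite gt_eqF ?pi_gt0.
split; [|split].
- move=> k k0; split.
    move=> nc; apply: contrapT => hne; apply: nc; apply: cont_G => j.
    rewrite lt_neqAle ceil_ge andbT; apply/eqP => E; apply: hne.
    have xpos : 0 < k * a j / pi by rewrite !mulr_gt0 ?invr_gt0 ?pi_gt0.
    have [h1 h2] := int_nat (ceil_ge1 xpos).
    exists j, `|Num.ceil (k * a j / pi)|%N; split => //.
    by rewrite h2 -E -kxk // gt_eqF.
  by move=> [j [m [m1 ->]]]; exact: not_cont.
- move=> x y x0 xy hc s t xs st ty.
  have s0 : 0 < s by rewrite (lt_trans x0).
  rewrite !GE ltr_pM2l //; apply: ltr_sum.
    by apply/hasP; exists (Ordinal hd) => //; rewrite mem_index_enum.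
  move=> j _; apply: T_decr => //.
  apply/eqP; apply: contraT => hne.
  set c := Num.ceil (s * a j / pi).
  have hle : c <= Num.ceil (t * a j / pi) by apply: le_ceil; rewrite ltW // mono_x.
  have hlt : c < Num.ceil (t * a j / pi) by rewrite lt_neqAle hne.
  have ct : c%:~R < t * a j / pi.
    by rewrite ltNge -ceil_le_int -ltNge.
  have xpos : 0 < s * a j / pi by rewrite !mulr_gt0 ?invr_gt0 ?pi_gt0.
  have [h1 h2] := int_nat (ceil_ge1 xpos).
  suff : False by []. apply: (not_cont (j:=j) ha h1).
  apply: hc; rewrite h2; apply/andP; split.
    by rewrite (lt_le_trans xs) // kx_le // ceil_ge.
  by rewrite (lt_trans _ ty) // kx_gt.
- by move=> j m m1; exact: G_inf.
Qed.
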